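(* Let $T=(T,\eta,\mu)$ be a monad on the category $\mathbf{Sets}$, let $a\colon T(X)\to X$ be a $T$-algebra and $b\colon X\to T(X)$ a basis ($\overline{T}$-coalgebra) on $a$. Let $X_b=\{x\in X\mid b(x)=\eta_X(x)\}$ with inclusion $e\colon X_b\hookrightarrow X$ (the equaliser of $b$ and $\eta_X$). If $X_b\neq\emptyset$, then $a\circ T(e)\colon T(X_b)\to X$ is an isomorphism of $T$-algebras from the free algebra $\mu_{X_b}\colon T^2(X_b)\to T(X_b)$ to $a$, and it is also an isomorphism of $\overline{T}$-coalgebras from $T(\eta_{X_b})$ to $b$. In particular, every $T$-algebra admitting a basis with nonempty $X_b$ is (isomorphic to) a free algebra.
   Context: For a monad $T=(T,\eta,\mu)$, an Eilenberg–Moore algebra is $a\colon T(X)\to X$ with $a\circ\eta_X=\mathrm{id}$, $a\circ\mu_X=a\circ T(a)$. The comonad $\overline{T}$ on algebras sends $a$ to $\mu_X\colon T^2X\to TX$, with counit $a$ and comultiplication $T(\eta_X)$. A basis ($\overline{T}$-coalgebra) on the algebra $a\colon TX\to X$ is a map $b\colon X\to TX$ with $b\circ a=\mu_X\circ T(b)$, $a\circ b=\mathrm{id}_X$ and $T(\eta_X)\circ b=T(b)\circ b$. For the free algebra $\mu_Y$, $T(\eta_Y)$ is a basis. *)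

(* Defs.v *)
(* a monad on the category Sets, modelled with Rocq types
   as sets and Rocq functions as maps; equalities of maps are stated
   pointwise. *)
Set Implicit Arguments.

Record monad : Type := Monad {
  T : Type -> Type;
  fmap : forall (A B : Type), (A -> B) -> T A -> T B;
  eta : forall A : Type, A -> T A;
  mu : forall A : Type, T (T A) -> T A;
  fmap_id : forall A (t : T A), fmap (fun x => x) t = t;
  fmap_comp : forall A B C (f : A -> B) (g : B -> C) (t : T A),
      fmap (fun x => g (f x)) t = fmap g (fmap f t);
  eta_nat : forall A B (f : A -> B) (x : A), fmap f (eta x) = eta (f x);
  mu_nat : forall A B (f : A -> B) (t : T (T A)),
      fmap f (mu t) = mu (fmap (fmap f) t);
  mu_eta_l : forall A (t : T A), mu (eta t) = t;
  mu_eta_r : forall A (t : T A), mu (fmap (@eta A) t) = t;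
  mu_assoc : forall A (t : T (T (T A))), mu (mu t) = mu (fmap (@mu A) t)
}.

Arguments fmap m {A B} f t.
Arguments eta m {A} x.
Arguments mu m {A} t.

Definition is_algebra (M : monad) (X : Type) (a : T M X -> X) : Prop :=
  (forall x : X, a (eta M x) = x) /\
  (forall t : T M (T M X), a (mu M t) = a (fmap M a t)).

Definition is_basis (M : monad) (X : Type) (a : T M X -> X) (b : X -> T M X)
  : Prop :=
  (forall t : T M X, b (a t) = mu M (fmap M b t)) /\
  (forall x : X, a (b x) = x) /\
  (forall x : X, fmap M (@eta M X) (b x) = fmap M b (b x)).

Definition is_alg_hom (M : monad) (A B : Type) (alpha : T M A -> A)
  (beta : T M B -> B) (f : A -> B) : Prop :=
  forall t : T M A, f (alpha t) = beta (fmap M f t).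

(* Homomorphism of T-bar-coalgebras from (A, c) to (B, d), where the comonad
   T-bar sends an algebra map f to T f. *)
Definition is_coalg_hom (M : monad) (A B : Type) (c : A -> T M A)
  (d : B -> T M B) (f : A -> B) : Prop :=
  forall x : A, d (f x) = fmap M f (c x).

Definition Xb (M : monad) (X : Type) (b : X -> T M X) : Type :=
  { x : X | b x = eta M x }.

Definition Xb_incl (M : monad) (X : Type) (b : X -> T M X) (y : @Xb M X b) : X :=
  proj1_sig y.

Arguments is_algebra {M X} a.
Arguments is_basis {M X} a b.
Arguments is_alg_hom {M A B} alpha beta f.
Arguments is_coalg_hom {M A B} c d f.
Arguments Xb {M X} b.
Arguments Xb_incl {M X} b y.

(* Main.v *)
Require Import Defs.
From Stdlib Require Import ClassicalEpsilon FunctionalExtensionality ProofIrrelevance.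

Lemma fmap_ext (M : monad) {A B} (f g : A -> B) t :
  (forall x, f x = g x) -> fmap M f t = fmap M g t.
Proof. intros H. f_equal. apply functional_extensionality. exact H. Qed.

Lemma fmap_comp' (M : monad) {A B C} (f : A -> B) (g : B -> C) t :
  fmap M g (fmap M f t) = fmap M (fun x => g (f x)) t.
Proof. symmetry; apply fmap_comp. Qed.

Theorem proposition3p1 (M : monad) (X : Type) (a : T M X -> X)
  (b : X -> T M X) (Ha : is_algebra a) (Hb : is_basis a b)
  (Hne : inhabited (Xb b)) :
  let phi := fun t : T M (Xb b) => a (fmap M (Xb_incl b) t) in
  (* phi is an isomorphism of T-algebras mu_{X_b} -> a ... *)
  is_alg_hom (@mu M (Xb b)) a phi /\
  (* ... and of T-bar-coalgebras T(eta_{X_b}) -> b *)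
  is_coalg_hom (fmap M (@eta M (Xb b))) b phi /\
  exists psi : X -> T M (Xb b),
    (forall t, psi (phi t) = t) /\ (forall x, phi (psi x) = x) /\
    is_alg_hom a (@mu M (Xb b)) psi /\
    is_coalg_hom b (fmap M (@eta M (Xb b))) psi.
Proof.
  destruct Hne as [x0].
  destruct Ha as [Ha1 Ha2]. destruct Hb as [Hb1 [Hb2 Hb3]].
  intros phi.
  set (e := Xb_incl b).
  set (r := fun x : X => match excluded_middle_informative (b x = eta M x) with
                         | left h => exist (fun x => b x = eta M x) x h
                         | right _ => x0 end).
  assert (Hre : forall y, r (e y) = y).
  { intros [y hy]. unfold r, e, Xb_incl; simpl.
    destruct (excluded_middle_informative (b y = eta M y)) as [h|h].
    - f_equal; apply proof_irrelevance.
    - exfalso; exact (h hy). }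
  set (q := fun u : T M X => match excluded_middle_informative (b (a u) = u) with
                             | left _ => e (r (a u)) | right _ => a u end).
  assert (Hqb : forall x, q (b x) = e (r x)).
  { intros x; unfold q. rewrite Hb2.
    destruct (excluded_middle_informative (b x = b x)); [reflexivity|congruence]. }
  assert (Hqe : forall x, q (eta M x) = x).
  { intros x; unfold q. rewrite Ha1.
    destruct (excluded_middle_informative (b x = eta M x)) as [h|h]; [|reflexivity].
    unfold r, e, Xb_incl. destruct (excluded_middle_informative (b x = eta M x));
      [reflexivity|contradiction]. }
  assert (K : forall x, fmap M (fun y => e (r y)) (b x) = b x).
  { intros x. rewrite (fmap_ext M (fun y => e (r y)) (fun y => q (b y))) by (intros y; symmetry; apply Hqb).
    rewrite fmap_comp, <- Hb3, fmap_comp'.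
    rewrite (fmap_ext M _ (fun y => y)) by apply Hqe. apply fmap_id. }
  assert (Hphi_eta : forall y, phi (eta M y) = e y).
  { intros y. unfold phi. rewrite eta_nat. apply Ha1. }
  assert (H1 : is_alg_hom (@mu M (Xb b)) a phi).
  { intros t. unfold phi. rewrite mu_nat, Ha2, fmap_comp'. reflexivity. }
  assert (H2 : is_coalg_hom (fmap M (@eta M (Xb b))) b phi).
  { intros t. unfold phi at 1. rewrite Hb1, fmap_comp'.
    rewrite (fmap_ext M _ (fun y => eta M (Xb_incl b y))) by (intros [y hy]; exact hy).
    rewrite <- fmap_comp', mu_eta_r, fmap_comp'.
    apply fmap_ext. intros; rewrite Hphi_eta; reflexivity. }
  set (psi := fun x => fmap M r (b x)).
  assert (P1 : forall t, psi (phi t) = t).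
  { intros t. unfold psi. rewrite H2, fmap_comp', fmap_comp'.
    rewrite (fmap_ext M _ (fun y => y)). apply fmap_id.
    intros y. rewrite Hphi_eta. apply Hre. }
  assert (P2 : forall x, phi (psi x) = x).
  { intros x. unfold phi, psi. rewrite fmap_comp'. fold e. rewrite K. apply Hb2. }
  split; [exact H1|]. split; [exact H2|].
  exists psi. split; [exact P1|]. split; [exact P2|]. split.
  - intros t. transitivity (psi (phi (mu M (fmap M psi t)))); [|apply P1]. f_equal.
    rewrite H1, fmap_comp'. rewrite (fmap_ext M _ (fun y => y)) by apply P2.
    rewrite fmap_id. reflexivity.
  - intros x.
    assert (Hinj : forall u v, fmap M phi u = fmap M phi v -> u = v).
    { intros u v huv. apply (f_equal (fmap M psi)) in huv.
      rewrite !fmap_comp' in huv.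
      rewrite !(fmap_ext M (fun x => psi (phi x)) (fun y => y) _ P1), !fmap_id in huv.
      exact huv. }
    apply Hinj. rewrite <- H2, P2, fmap_comp'.
    rewrite (fmap_ext M _ (fun y => y)) by apply P2. symmetry; apply fmap_id.
Qed.
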